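(* Let $X$ be a Tychonoff space with $|X|>1$. The following are equivalent: (a) $X$ has an isolated point; (b) $\mathbb{R}$ is a direct summand of $C(X)$ (as a ring); (c) $\mathbb{AG}(X)$ has a leaf vertex; (d) $\mathbb{AG}(X)$ is not triangulated.
   Context: $C(X)$ is the ring of real-valued continuous functions on $X$. $\mathbb{A}(X)$ is the set of nonzero ideals $I$ of $C(X)$ for which there is a nonzero ideal $J$ with $IJ=\{0\}$; $\mathbb{AG}(X)$ has vertex set $\mathbb{A}(X)$, distinct $I,J$ adjacent iff $IJ=\{0\}$. A leaf vertex is a vertex adjacent to exactly one vertex. A graph is triangulated if every vertex lies on some triangle (3-cycle). *)

(* Defs.v *)
From Stdlib Require Import Reals.
Open Scope R_scope.

Record topology (X : Type) : Type := Topology {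
  is_open : (X -> Prop) -> Prop;
  open_empty : is_open (fun _ => False);
  open_full : is_open (fun _ => True);
  open_inter : forall U V, is_open U -> is_open V -> is_open (fun x => U x /\ V x);
  open_union : forall (F : (X -> Prop) -> Prop),
      (forall U, F U -> is_open U) -> is_open (fun x => exists U, F U /\ U x)
}.
Arguments is_open {X} t U.

Definition is_closed {X : Type} (T : topology X) (F : X -> Prop) : Prop :=
  is_open T (fun x => ~ F x).

Definition R_open (U : R -> Prop) : Prop :=
  forall r, U r -> exists eps, 0 < eps /\ forall s, Rabs (s - r) < eps -> U s.

Definition continuous_R {X : Type} (T : topology X) (f : X -> R) : Prop :=
  forall U, R_open U -> is_open T (fun x => U (f x)).

Definition T1_space {X : Type} (T : topology X) : Prop :=
  forall x y : X, x <> y -> exists U, is_open T U /\ U x /\ ~ U y.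

Definition completely_regular {X : Type} (T : topology X) : Prop :=
  forall (F : X -> Prop) (x : X), is_closed T F -> ~ F x ->
    exists f : X -> R, continuous_R T f /\ (forall y, 0 <= f y <= 1) /\
      f x = 0 /\ forall y, F y -> f y = 1.

Definition tychonoff {X : Type} (T : topology X) : Prop :=
  T1_space T /\ completely_regular T.

Definition isolated_point {X : Type} (T : topology X) (x : X) : Prop :=
  is_open T (fun y => y = x).

(* C(X): elements are continuous real functions; ring operations pointwise. *)
Definition CX {X : Type} (T : topology X) (f : X -> R) : Prop := continuous_R T f.

Definition zero_fun {X : Type} : X -> R := fun _ => 0.

Definition is_ideal {X : Type} (T : topology X) (I : (X -> R) -> Prop) : Prop :=
  (forall f, I f -> CX T f) /\
  I zero_fun /\
  (forall f g, I f -> I g -> I (fun x => f x + g x)) /\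
  (forall f, I f -> I (fun x => - f x)) /\
  (forall f g, CX T g -> I f -> I (fun x => g x * f x)).

Definition nonzero_ideal {X : Type} (I : (X -> R) -> Prop) : Prop :=
  exists f, I f /\ f <> zero_fun.

(* IJ = {0}: since IJ is generated by the products fg (f in I, g in J),
   this says all such products vanish. *)
Definition ideal_prod_zero {X : Type} (I J : (X -> R) -> Prop) : Prop :=
  forall f g, I f -> J g -> (fun x => f x * g x) = zero_fun.

Definition same_ideal {X : Type} (I J : (X -> R) -> Prop) : Prop :=
  forall f, I f <-> J f.

Definition AX {X : Type} (T : topology X) (I : (X -> R) -> Prop) : Prop :=
  is_ideal T I /\ nonzero_ideal I /\
  exists J, is_ideal T J /\ nonzero_ideal J /\ ideal_prod_zero I J.

Definition AG_adj {X : Type} (T : topology X) (I J : (X -> R) -> Prop) : Prop :=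
  AX T I /\ AX T J /\ ~ same_ideal I J /\ ideal_prod_zero I J.

Definition AG_has_leaf {X : Type} (T : topology X) : Prop :=
  exists I, AX T I /\ exists J, AG_adj T I J /\
    forall K, AG_adj T I K -> same_ideal K J.

Definition AG_triangulated {X : Type} (T : topology X) : Prop :=
  forall I, AX T I -> exists J K,
    AG_adj T I J /\ AG_adj T J K /\ AG_adj T K I.

Definition R_direct_summand {X : Type} (T : topology X) : Prop :=
  exists A B : (X -> R) -> Prop,
    is_ideal T A /\ is_ideal T B /\
    (forall f, A f -> B f -> f = zero_fun) /\
    (forall f, CX T f -> exists a b, A a /\ B b /\ f = (fun x => a x + b x)) /\
    exists phi : R -> (X -> R),
      (forall r, A (phi r)) /\
      (forall r s, phi r = phi s -> r = s) /\
      (forall a, A a -> exists r, phi r = a) /\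
      (forall r s, phi (r + s) = (fun x => phi r x + phi s x)) /\
      (forall r s, phi (r * s) = (fun x => phi r x * phi s x)).

(* Main.v *)
Require Import Defs.
From Stdlib Require Import Reals Lra.
From Stdlib Require Import Classical FunctionalExtensionality PropExtensionality ClassicalEpsilon.
Open Scope R_scope.

Lemma set_ext {X : Type} (P Q : X -> Prop) : (forall x, P x <-> Q x) -> P = Q.
Proof. intros H; apply functional_extensionality; intro x; apply propositional_extensionality; apply H. Qed.

Lemma open_local {X : Type} (T : topology X) (S : X -> Prop) :
  (forall x, S x -> exists V, is_open T V /\ V x /\ forall y, V y -> S y) -> is_open T S.
Proof.
  intros H.
  assert (E : S = (fun x => exists U, (fun V => is_open T V /\ forall y, V y -> S y) U /\ U x)).
  { apply set_ext; intro x; split.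
    - intro Hx. destruct (H x Hx) as [V [HV [HVx HVS]]]. exists V; auto.
    - intros [U [[_ HU] HUx]]; auto. }
  rewrite E. apply open_union. intros U [HU _]; exact HU.
Qed.

Lemma ball_open (a d : R) : R_open (fun s => Rabs (s - a) < d).
Proof. intros r Hr. exists (d - Rabs (r - a)); split; [lra|]. intros s Hs.
 pose proof (Rabs_triang (s - r) (r - a)) as H.
 replace (s - r + (r - a)) with (s - a) in H by ring. lra. Qed.

Lemma cont_binop {X : Type} (T : topology X) (op : R -> R -> R) (f g : X -> R) :
  (forall a b eps, 0 < eps -> exists d, 0 < d /\ forall s t, Rabs (s - a) < d -> Rabs (t - b) < d -> Rabs (op s t - op a b) < eps) ->
  continuous_R T f -> continuous_R T g -> continuous_R T (fun x => op (f x) (g x)).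
Proof.
  intros Hop Hf Hg U HU. apply open_local. intros x0 Hx0.
  destruct (HU _ Hx0) as [eps [Heps HB]].
  destruct (Hop (f x0) (g x0) eps Heps) as [d [Hd Hst]].
  exists (fun x => Rabs (f x - f x0) < d /\ Rabs (g x - g x0) < d). split; [|split].
  - apply open_inter; [apply (Hf (fun s => Rabs (s - f x0) < d)) | apply (Hg (fun s => Rabs (s - g x0) < d))]; apply ball_open.
  - unfold Rminus; rewrite !Rplus_opp_r, Rabs_R0; lra.
  - intros y [H1 H2]. apply HB. apply Hst; assumption.
Qed.

Lemma cont_add {X : Type} (T : topology X) f g : continuous_R T f -> continuous_R T g -> continuous_R T (fun x => f x + g x).
Proof. apply (cont_binop T Rplus). intros a b eps He. exists (eps/2); split; [lra|].
 intros s t Hs Ht. replace (s + t - (a + b)) with ((s - a) + (t - b)) by ring.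
 eapply Rle_lt_trans; [apply Rabs_triang|lra]. Qed.

Lemma cont_sub {X : Type} (T : topology X) f g : continuous_R T f -> continuous_R T g -> continuous_R T (fun x => f x - g x).
Proof. apply (cont_binop T Rminus). intros a b eps He. exists (eps/2); split; [lra|].
 intros s t Hs Ht. replace (s - t - (a - b)) with ((s - a) + - (t - b)) by ring.
 eapply Rle_lt_trans; [apply Rabs_triang|rewrite Rabs_Ropp; lra]. Qed.

Lemma cont_mul {X : Type} (T : topology X) f g : continuous_R T f -> continuous_R T g -> continuous_R T (fun x => f x * g x).
Proof. apply (cont_binop T Rmult). intros a b eps He.
 set (D := Rabs a + Rabs b + 1).
 assert (HD : 0 < D) by (unfold D; pose proof (Rabs_pos a); pose proof (Rabs_pos b); lra).
 exists (Rmin 1 (eps / D)). split.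
 { apply Rmin_pos; [lra| apply Rdiv_lt_0_compat; lra]. }
 intros s t Hs Ht.
 set (d := Rmin 1 (eps / D)) in *.
 assert (Hd1 : d <= 1) by apply Rmin_l.
 assert (Hd2 : d * D <= eps).
 { assert (d <= eps / D) by apply Rmin_r.
   apply Rmult_le_compat_r with (r := D) in H; [|lra].
   unfold Rdiv in H; rewrite Rmult_assoc, Rinv_l, Rmult_1_r in H; lra. }
 replace (s*t - a*b) with ((s-a)*(t-b) + a*(t-b) + b*(s-a)) by ring.
 pose proof (Rabs_triang ((s-a)*(t-b) + a*(t-b)) (b*(s-a))).
 pose proof (Rabs_triang ((s-a)*(t-b)) (a*(t-b))).
 rewrite !Rabs_mult in *.
 pose proof (Rabs_pos (s-a)); pose proof (Rabs_pos (t-b));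
 pose proof (Rabs_pos a); pose proof (Rabs_pos b).
 unfold D in Hd2.
 assert (Rabs (s-a) * Rabs (t-b) < d * d) by nra.
 assert (Rabs a * Rabs (t-b) <= Rabs a * d) by nra.
 assert (Rabs b * Rabs (s-a) <= Rabs b * d) by nra.
 nra.
Qed.

Lemma cont_const {X : Type} (T : topology X) (c : R) : continuous_R T (fun _ => c).
Proof. intros U HU. apply open_local. intros x Hx. exists (fun _ => True).
 split; [apply open_full | split; auto]. Qed.

Lemma cont_lip {X : Type} (T : topology X) (phi : R -> R) (f : X -> R) :
  (forall s t, Rabs (phi s - phi t) <= Rabs (s - t)) -> continuous_R T f -> continuous_R T (fun x => phi (f x)).
Proof. intros Hp Hf U HU. apply (Hf (fun s => U (phi s))). intros r Hr.
 destruct (HU _ Hr) as [e [He HB]]. exists e; split; auto. intros s Hs. apply HB.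
 eapply Rle_lt_trans; [apply Hp|exact Hs]. Qed.

Lemma cont_opp {X : Type} (T : topology X) f : continuous_R T f -> continuous_R T (fun x => - f x).
Proof. apply cont_lip. intros s t. replace (-s - -t) with (-(s-t)) by ring. rewrite Rabs_Ropp; lra. Qed.

Lemma T1_compl_open {X : Type} (T : topology X) (H1 : T1_space T) x : is_open T (fun y => ~ y = x).
Proof. apply open_local. intros y Hy. destruct (H1 y x Hy) as [U [HU [HUy HUx]]].
 exists U; repeat split; auto. intros z Hz Hzx; subst; auto. Qed.

Lemma sep {X : Type} (T : topology X) (HT : tychonoff T) p q : p <> q ->
  exists u, CX T u /\ u p = 0 /\ u q = 1.
Proof. destruct HT as [H1 H2]. intro Hpq.
 destruct (H2 (fun y => y = q) p) as [f [Hf [_ [Hfp Hfq]]]].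
 - unfold is_closed. apply T1_compl_open; auto.
 - exact Hpq.
 - exists f. auto. Qed.

Definition Gen {X : Type} (T : topology X) (h : X -> R) : (X -> R) -> Prop :=
  fun f => exists c, CX T c /\ f = (fun y => c y * h y).

Lemma Gen_ideal {X : Type} (T : topology X) h : CX T h -> is_ideal T (Gen T h).
Proof.
 intros Hh. unfold is_ideal; repeat split.
 - intros f [c [Hc ->]]. apply cont_mul; auto.
 - exists (fun _ => 0). split. apply cont_const. unfold zero_fun; apply functional_extensionality; intro; ring.
 - intros f g [c [Hc ->]] [d [Hd ->]]. exists (fun y => c y + d y); split. apply cont_add; auto. apply functional_extensionality; intro; ring.
 - intros f [c [Hc ->]]. exists (fun y => - c y); split. apply cont_opp; auto. apply functional_extensionality; intro; ring.
 - intros f g Hg [c [Hc ->]]. exists (fun y => g y * c y); split. apply cont_mul; auto. apply functional_extensionality; intro; ring.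
Qed.

Lemma Gen_self {X : Type} (T : topology X) h : Gen T h h.
Proof. exists (fun _ => 1). split. apply cont_const. apply functional_extensionality; intro; ring. Qed.

Definition ind {X : Type} (x y : X) : R := if excluded_middle_informative (y = x) then 1 else 0.

Lemma ind_eq {X : Type} (x : X) : ind x x = 1.
Proof. unfold ind; destruct (excluded_middle_informative (x = x)); congruence. Qed.
Lemma ind_neq {X : Type} (x y : X) : y <> x -> ind x y = 0.
Proof. unfold ind; destruct (excluded_middle_informative (y = x)); congruence. Qed.

Lemma ind_cont {X : Type} (T : topology X) (HT : tychonoff T) x :
  isolated_point T x -> CX T (ind x).
Proof. intros Hiso U HU. apply open_local. intros y Hy. destruct (classic (y = x)) as [E|E].
 - rewrite E in Hy. exists (fun z => z = x). split; [exact Hiso|split; auto].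
   intros z Hz; rewrite Hz; exact Hy.
 - exists (fun z => ~ z = x). split. apply T1_compl_open, HT. split; auto.
   intros z Hz. rewrite ind_neq by auto. rewrite ind_neq in Hy by auto. exact Hy.
Qed.

Definition Ex {X : Type} (x : X) : (X -> R) -> Prop := fun a => exists r, a = fun y => r * ind x y.
Definition Mx {X : Type} (T : topology X) (x : X) : (X -> R) -> Prop := fun f => CX T f /\ f x = 0.

Lemma Ex_ideal {X : Type} (T : topology X) x : CX T (ind x) -> is_ideal T (Ex x).
Proof. intros Hi. unfold is_ideal; repeat split.
 - intros f [r ->]. apply cont_mul; [apply cont_const|auto].
 - exists 0. unfold zero_fun; apply functional_extensionality; intro; ring.
 - intros f g [r ->] [s ->]. exists (r + s). apply functional_extensionality; intro; ring.
 - intros f [r ->]. exists (- r). apply functional_extensionality; intro; ring.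
 - intros f g Hg [r ->]. exists (g x * r). apply functional_extensionality; intro y.
   destruct (classic (y = x)) as [E|E]. rewrite E; ring. rewrite ind_neq by auto; ring.
Qed.

Lemma Mx_ideal {X : Type} (T : topology X) x : is_ideal T (Mx T x).
Proof. unfold is_ideal, Mx. split; [|split; [|split; [|split]]].
 - intros f [Hf _]; auto.
 - split. apply cont_const. reflexivity.
 - intros f g [Hf Hf0] [Hg Hg0]. split. apply cont_add; auto. rewrite Hf0, Hg0; ring.
 - intros f [Hf Hf0]. split. apply cont_opp; auto. rewrite Hf0; ring.
 - intros f g Hg [Hf Hf0]. split. apply cont_mul; auto. rewrite Hf0; ring.
Qed.

Lemma a_to_b {X : Type} (T : topology X) (HT : tychonoff T) :
  (exists x, isolated_point T x) -> R_direct_summand T.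
Proof. intros [x Hx]. pose proof (ind_cont T HT x Hx) as Hi.
 exists (Ex x), (Mx T x). split; [apply Ex_ideal; auto|]. split; [apply Mx_ideal|].
 split.
 { intros f [r ->] [_ H0]. rewrite ind_eq in H0. assert (r = 0) by lra. subst.
   unfold zero_fun; apply functional_extensionality; intro; ring. }
 split.
 { intros f Hf. exists (fun y => f x * ind x y), (fun y => f y - f x * ind x y).
   split; [exists (f x); auto|]. split.
   - split. apply cont_sub; auto. apply cont_mul; [apply cont_const|auto].
     rewrite ind_eq; ring.
   - apply functional_extensionality; intro; ring. }
 exists (fun r y => r * ind x y). split; [intro r; exists r; auto|]. split.
 { intros r s H. apply (f_equal (fun f => f x)) in H. rewrite ind_eq in H. lra. }
 split; [intros a [r ->]; exists r; auto|]. split.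
 { intros r s; apply functional_extensionality; intro; ring. }
 intros r s; apply functional_extensionality; intro y.
 destruct (classic (y = x)) as [E|E]. rewrite E, ind_eq; ring. rewrite ind_neq by auto; ring.
Qed.

Lemma prod_zero_sym {X : Type} (I J : (X -> R) -> Prop) : ideal_prod_zero I J -> ideal_prod_zero J I.
Proof. intros H f g Hf Hg. rewrite <- (H g f Hg Hf). apply functional_extensionality; intro; ring. Qed.

Lemma adj_sym {X : Type} (T : topology X) I J : AG_adj T I J -> AG_adj T J I.
Proof. intros [A [B [C D]]]. split; auto. split; auto. split.
 - intro E; apply C; intro f; split; apply E.
 - apply prod_zero_sym; auto. Qed.

Lemma a_to_c {X : Type} (T : topology X) (HT : tychonoff T) (Hcard : exists x y : X, x <> y) :
  (exists x, isolated_point T x) -> AG_has_leaf T.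
Proof. intros [x Hx]. pose proof (ind_cont T HT x Hx) as Hi.
 assert (Hy : exists y, y <> x).
 { destruct Hcard as [a [b Hab]]. destruct (classic (a = x)); [exists b|exists a]; congruence. }
 destruct Hy as [y Hyx].
 destruct (sep T HT x y (not_eq_sym Hyx)) as [u [Hu [Hux Huy]]].
 assert (PZ : ideal_prod_zero (Mx T x) (Ex x)).
 { intros f g [_ Hf] [r ->]. apply functional_extensionality; intro z. unfold zero_fun.
   destruct (classic (z = x)) as [E|E]. rewrite E, Hf; ring. rewrite ind_neq by auto; ring. }
 assert (MEx : Ex x (ind x)) by (exists 1; apply functional_extensionality; intro; ring).
 assert (Eznz : ind x <> zero_fun).
 { intro E. apply (f_equal (fun f => f x)) in E. unfold zero_fun in E. rewrite ind_eq in E. lra. }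
 assert (Mu : Mx T x u) by (split; auto).
 assert (unz : u <> zero_fun).
 { intro E. apply (f_equal (fun f => f y)) in E. unfold zero_fun in E. lra. }
 assert (AM : AX T (Mx T x)).
 { split; [apply Mx_ideal|]. split; [exists u; auto|].
   exists (Ex x). split; [apply Ex_ideal; auto|]. split; [exists (ind x); auto|]. exact PZ. }
 assert (AE : AX T (Ex x)).
 { split; [apply Ex_ideal; auto|]. split; [exists (ind x); auto|].
   exists (Mx T x). split; [apply Mx_ideal|]. split; [exists u; auto|]. apply prod_zero_sym; exact PZ. }
 exists (Mx T x). split; auto. exists (Ex x). split.
 { split; auto. split; auto. split; auto.
   intro E. destruct ((proj1 (E u)) Mu) as [r Hr].
   apply (f_equal (fun f => f y)) in Hr. rewrite ind_neq in Hr by auto. lra. }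
 intros K [_ [[HK [[k0 [Hk0 Hk0nz]] _]] [_ PK]]].
 assert (KE : forall k, K k -> Ex x k).
 { intros k Hk. exists (k x). apply functional_extensionality; intro z.
   destruct (classic (z = x)) as [E|E]. rewrite E, ind_eq; ring.
   destruct (sep T HT x z (not_eq_sym E)) as [v [Hv [Hvx Hvz]]].
   assert (Mv : Mx T x v) by (split; auto).
   pose proof (PK v k Mv Hk) as P. apply (f_equal (fun f => f z)) in P. unfold zero_fun in P.
   rewrite Hvz in P. rewrite ind_neq by auto. lra. }
 intro f. split; [apply KE|].
 intros [r ->]. destruct (KE k0 Hk0) as [c Hc].
 assert (c <> 0).
 { intro C; subst. apply Hk0nz. unfold zero_fun; apply functional_extensionality; intro; ring. }
 destruct HK as [_ [_ [_ [_ HKm]]]].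
 replace (fun y0 => r * ind x y0) with (fun y0 => (fun _ => r / c) y0 * k0 y0).
 - apply HKm; auto. apply cont_const.
 - apply functional_extensionality; intro z. rewrite Hc. field. auto.
Qed.

Lemma c_to_nd {X : Type} (T : topology X) : AG_has_leaf T -> ~ AG_triangulated T.
Proof. intros [I [AI [J [HIJ Hleaf]]]] Htri.
 destruct (Htri I AI) as [J' [K' [H1 [H2 H3]]]].
 pose proof (Hleaf J' H1) as E1. pose proof (Hleaf K' (adj_sym T _ _ H3)) as E2.
 destruct H2 as [_ [_ [NE _]]]. apply NE. intro f. specialize (E1 f); specialize (E2 f). tauto.
Qed.

Lemma b_to_a {X : Type} (T : topology X) (HT : tychonoff T) :
  R_direct_summand T -> exists x, isolated_point T x.
Proof.
 intros [A [B [HA [_ [_ [_ [phi [PA [Pinj [Psurj [Padd Pmul]]]]]]]]]]].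
 assert (P0 : forall y, phi 0 y = 0).
 { intro y. pose proof (Padd 0 0) as H. rewrite Rplus_0_r in H.
   apply (f_equal (fun f => f y)) in H. lra. }
 set (e := phi 1).
 assert (Eidem : forall y, e y * e y = e y).
 { intro y. pose proof (Pmul 1 1) as H. rewrite Rmult_1_r in H.
   apply (f_equal (fun f => f y)) in H. unfold e. lra. }
 assert (Enz : exists x, e x <> 0).
 { apply NNPP. intro N. apply R1_neq_R0. apply Pinj. apply functional_extensionality; intro y.
   rewrite P0. apply NNPP. intro C. apply N. exists y. exact C. }
 destruct Enz as [x Hx].
 assert (Ex1 : e x = 1). { pose proof (Eidem x). apply Rmult_eq_reg_r with (e x); auto. lra. }
 destruct HA as [HAc [_ [_ [_ HAm]]]].
 assert (Ec : CX T e) by (apply HAc, PA).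
 exists x. unfold isolated_point.
 replace (fun y => y = x) with (fun y => (fun r => / 2 < r) (e y)).
 { apply Ec. intros r Hr. exists (r - /2). split; [lra|]. intros s Hs.
   pose proof (Rabs_def2 _ _ Hs). lra. }
 apply set_ext; intro y; split.
 - intro Hy. apply NNPP; intro Nyx.
   assert (Ey1 : e y = 1).
   { pose proof (Eidem y). assert (e y <> 0) by lra.
     apply Rmult_eq_reg_r with (e y); auto. lra. }
   destruct (sep T HT y x Nyx) as [u [Hu [Huy Hux]]].
   destruct (Psurj _ (HAm e u Hu (PA 1))) as [r Hr].
   assert (rnz : r <> 0).
   { intro C. subst r. apply (f_equal (fun f => f x)) in Hr. rewrite P0 in Hr.
     fold e in Hr. rewrite Hux, Ex1 in Hr. lra. }
   pose proof (Pmul r (/ r)) as H. rewrite Rinv_r in H by auto. fold e in H.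
   rewrite Hr in H. apply (f_equal (fun f => f y)) in H. simpl in H.
   rewrite Huy, Ey1 in H. lra.
 - intro Hy. rewrite Hy, Ex1. lra.
Qed.

Lemma rmax_lip (c : R) (s t : R) : Rabs (Rmax 0 (c - s) - Rmax 0 (c - t)) <= Rabs (s - t).
Proof. unfold Rmax. destruct (Rle_dec 0 (c - s)); destruct (Rle_dec 0 (c - t));
 unfold Rabs; repeat destruct Rcase_abs; lra. Qed.

Lemma rmax_lip2 (c : R) (s t : R) : Rabs (Rmax 0 (s - c) - Rmax 0 (t - c)) <= Rabs (s - t).
Proof. unfold Rmax. destruct (Rle_dec 0 (s - c)); destruct (Rle_dec 0 (t - c));
 unfold Rabs; repeat destruct Rcase_abs; lra. Qed.

Lemma rmax_prod (t : R) : Rmax 0 (/2 - t) * Rmax 0 (t - /2) = 0.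
Proof. unfold Rmax. destruct (Rle_dec 0 (/2 - t)); destruct (Rle_dec 0 (t - /2)); nra. Qed.

Lemma nd_to_a {X : Type} (T : topology X) (HT : tychonoff T) :
  ~ AG_triangulated T -> exists x, isolated_point T x.
Proof.
 intro ND. apply NNPP. intro NI. apply ND. clear ND.
 intros I AI. pose proof AI as [HI [_ [J0 [HJ0 [[g [Hg gnz]] PIJ]]]]].
 assert (Hgc : CX T g) by (apply HJ0; auto).
 assert (Hp : exists p, g p <> 0).
 { apply NNPP. intro N. apply gnz. apply functional_extensionality; intro y.
   apply NNPP. intro C. apply N. exists y. exact C. }
 destruct Hp as [p Hp].
 assert (Hq : exists q, g q <> 0 /\ q <> p).
 { apply NNPP. intro N. apply NI. exists p. unfold isolated_point.
   replace (fun y => y = p) with (fun y => (fun r => r <> 0) (g y)).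
   - apply (Hgc (fun r => r <> 0)). intros r Hr. exists (Rabs r). split. apply Rabs_pos_lt; auto.
     intros s Hs C. subst s. rewrite Rminus_0_l, Rabs_Ropp in Hs. lra.
   - apply set_ext; intro y; split.
     + intro Hy. apply NNPP; intro C. apply N. exists y; auto.
     + intros ->; auto. }
 destruct Hq as [q [Hq Hqp]].
 destruct (sep T HT p q (not_eq_sym Hqp)) as [u [Hu [Hup Huq]]].
 set (h1 := fun y => g y * Rmax 0 (/2 - u y)).
 set (h2 := fun y => g y * Rmax 0 (u y - /2)).
 assert (C1 : CX T h1).
 { apply cont_mul; auto. apply (cont_lip T (fun s => Rmax 0 (/2 - s))); auto. intros; apply rmax_lip. }
 assert (C2 : CX T h2).
 { apply cont_mul; auto. apply (cont_lip T (fun s => Rmax 0 (s - /2))); auto. intros; apply rmax_lip2. }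
 assert (h1p : h1 p <> 0).
 { unfold h1. rewrite Hup. rewrite Rmax_right by lra. intro C. apply Rmult_integral in C. lra. }
 assert (h2q : h2 q <> 0).
 { unfold h2. rewrite Huq. rewrite Rmax_right by lra. intro C. apply Rmult_integral in C. lra. }
 assert (h2p : h2 p = 0).
 { unfold h2. rewrite Hup. rewrite Rmax_left by lra. ring. }
 assert (h1q : h1 q = 0).
 { unfold h1. rewrite Huq. rewrite Rmax_left by lra. ring. }
 assert (NZ : forall h y, h y <> 0 -> nonzero_ideal (Gen T h)).
 { intros h y Hy. exists h. split. apply Gen_self. intro E. apply Hy. rewrite E. reflexivity. }
 assert (P12 : ideal_prod_zero (Gen T h1) (Gen T h2)).
 { intros f f' [c [_ ->]] [d [_ ->]]. apply functional_extensionality; intro y. unfold zero_fun, h1, h2.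
   transitivity (c y * d y * (g y * g y) * (Rmax 0 (/2 - u y) * Rmax 0 (u y - /2))); [ring|].
   rewrite rmax_prod; ring. }
 assert (PIh : forall k, ideal_prod_zero I (Gen T (fun y => g y * k y))).
 { intros k f f' Hf [c [_ ->]]. apply functional_extensionality; intro y. unfold zero_fun.
   pose proof (PIJ f g Hf Hg) as E. apply (f_equal (fun F => F y)) in E. unfold zero_fun in E.
   simpl in E. destruct (Req_dec (g y) 0) as [G|G].
   - rewrite G; ring.
   - assert (f y = 0). { apply Rmult_integral in E. destruct E; auto. contradiction. }
     rewrite H; ring. }
 assert (NI1 : forall h y, Gen T h y -> ~ I y -> ~ same_ideal I (Gen T h) /\ ~ same_ideal (Gen T h) I).
 { intros h y Hy NIy. split; intro E; apply NIy; apply E; auto. }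
 assert (h1notI : ~ I h1).
 { intro H. pose proof (PIJ h1 g H Hg) as E. apply (f_equal (fun F => F p)) in E.
   unfold zero_fun in E. simpl in E. apply Rmult_integral in E. tauto. }
 assert (h2notI : ~ I h2).
 { intro H. pose proof (PIJ h2 g H Hg) as E. apply (f_equal (fun F => F q)) in E.
   unfold zero_fun in E. simpl in E. apply Rmult_integral in E. tauto. }
 assert (G1 : is_ideal T (Gen T h1)) by (apply Gen_ideal; auto).
 assert (G2 : is_ideal T (Gen T h2)) by (apply Gen_ideal; auto).
 assert (AG1 : AX T (Gen T h1)).
 { split; auto. split. apply (NZ h1 p h1p). exists (Gen T h2). split; auto. split; auto. apply (NZ h2 q h2q). }
 assert (AG2 : AX T (Gen T h2)).
 { split; auto. split. apply (NZ h2 q h2q). exists (Gen T h1). split; auto. split; auto. apply (NZ h1 p h1p).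
   apply prod_zero_sym; auto. }
 exists (Gen T h1), (Gen T h2). split; [|split].
 - split; auto. split; auto. split. apply (NI1 h1 h1 (Gen_self T h1) h1notI). apply (PIh (fun y => Rmax 0 (/2 - u y))).
 - split; auto. split; auto. split; auto.
   intro E. destruct (proj1 (E h1) (Gen_self T h1)) as [c [_ Hc]].
   apply (f_equal (fun F => F p)) in Hc. simpl in Hc. rewrite h2p in Hc. apply h1p. rewrite Hc. ring.
 - split; auto. split; auto. split. apply (NI1 h2 h2 (Gen_self T h2) h2notI).
   apply prod_zero_sym. apply (PIh (fun y => Rmax 0 (u y - /2))).
Qed.

Theorem mainTheorem15 (X : Type) (T : topology X) (HT : tychonoff T)
  (Hcard : exists x y : X, x <> y) :
  ((exists x, isolated_point T x) <-> R_direct_summand T) /\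
  (R_direct_summand T <-> AG_has_leaf T) /\
  (AG_has_leaf T <-> ~ AG_triangulated T).
Proof.
  split; [split; [apply a_to_b; auto | apply b_to_a; auto]|].
  split; split; intro H.
  - apply a_to_c; auto. apply b_to_a; auto.
  - apply a_to_b; auto. apply nd_to_a; auto. apply c_to_nd; auto.
  - apply c_to_nd; auto.
  - apply a_to_c; auto. apply nd_to_a; auto.
Qed.
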